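(* Let $a>0$, $\alpha\in[0,1)$, $f\in\mathcal C_a$ and $g=\mathrm{Sh}_\alpha(f)$. Then $g\in\mathcal P$, $g$ is differentiable on $(a_g,b_g)$ with $g'(x)<\alpha$ for all $x\in(a_g,b_g)$, and $\mathrm{gr}(g)$ is stable under the shaking $\mathrm{Sh}_\alpha$, i.e. $\mathrm{Sh}_\alpha(\mathrm{gr}(g))=\mathrm{gr}(g)$.
   Context: $\mathcal C_a$ is the set of $C^1$ functions $f:\mathbb R\to\mathbb R$ that are even, satisfy $f(s)=|s|$ for $|s|\ge a$ and are strictly convex on $[-a,a]$. For $f\in\mathcal C_a$: $F_\alpha(s)=f(s)-\alpha s$, $x_\alpha^+=(f')^{-1}(\alpha)\in[0,a)$ (inverse of $f':[-a,a]\to[-1,1]$); let $F_\alpha^{-1}$ be the inverse of $F_\alpha|_{[x_\alpha^+,\infty)}$, $\phi=F_\alpha^{-1}\circ F_\alpha$, $\delta_x=(1-\alpha)^{-1}F_\alpha(x)-\phi(x)$, $s_\alpha=x_\alpha^++\delta_{x_\alpha^+}$; $x\mapsto x+\delta_x$ is an increasing bijection $(-\infty,x_\alpha^+]\to(-\infty,s_\alpha]$ with inverse $\tau$. Define $\mathrm{Sh}_\alpha(f)(x)=\alpha x+F_\alpha(\tau(x))$ for $x\le s_\alpha$ and $=x$ for $x>s_\alpha$. $\mathcal P$ is the set of continuous $g:\mathbb R\to\mathbb R$ with $g(x)\ge|x|$ for all $x$, $g(x)=|x|$ for $|x|$ large, and $g(x_0)\ne|x_0|$ for some $x_0$; for $g\in\mathcal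 P$, $a_g=\inf\{x:g(x)\ne|x|\}$, $b_g=\sup\{x:g(x)\ne|x|\}$, $\mathrm{gr}(g)=\{(x,y)\in[a_g,b_g]\times\mathbb R_{\ge0}:|x|\le y\le g(x)\}$. Shaking of sets: $D$ is the line $y=-x$, $v_\alpha$ the unit vector positively collinear to $(1,\alpha)$; for compact $K\subseteq\mathbb R^2$, $\mathrm{Sh}_\alpha(K)=\bigcup_{p\in D}K^p$ with $K^p=\emptyset$ if $K\cap(p+\mathbb Rv_\alpha)=\emptyset$ and otherwise the segment from $p$ to $p+|K\cap(p+\mathbb Rv_\alpha)|\,v_\alpha$ ($|\cdot|$ one-dimensional Lebesgue measure). *)

(* Defs.v *)
From HB Require Import structures.
From mathcomp Require Import all_boot all_order all_algebra.
From mathcomp Require Import all_classical all_reals all_analysis.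
Set Implicit Arguments. Unset Strict Implicit. Unset Printing Implicit Defensive.
Import Order.TTheory GRing.Theory Num.Theory.
Import numFieldNormedType.Exports.
Local Open Scope classical_set_scope.
Local Open Scope ring_scope.

Section Defs.
Variable R : realType.

Definition inCa (a : R) (f : R -> R) : Prop :=
  [/\ (forall x, derivable f x 1) /\ continuous (derive1 f),
      (forall x, f (- x) = f x),
      (forall s, a <= `|s| -> f s = `|s|) &
      (forall x y t, -a <= x -> y <= a -> x < y -> 0 < t < 1 ->
          f (t * x + (1 - t) * y) < t * f x + (1 - t) * f y)].

Definition Fal (f : R -> R) (al : R) (s : R) : R := f s - al * s.

Definition xplus (a : R) (f : R -> R) (al : R) : R :=
  xget 0 [set x | -a <= x <= a /\ derive1 f x = al].

Definition Finv (a : R) (f : R -> R) (al : R) (y : R) : R :=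
  xget 0 [set x | xplus a f al <= x /\ Fal f al x = y].

Definition phi (a : R) (f : R -> R) (al : R) (x : R) : R :=
  Finv a f al (Fal f al x).

Definition delta (a : R) (f : R -> R) (al : R) (x : R) : R :=
  (1 - al)^-1 * Fal f al x - phi a f al x.

Definition salpha (a : R) (f : R -> R) (al : R) : R :=
  xplus a f al + delta a f al (xplus a f al).

Definition tau (a : R) (f : R -> R) (al : R) (y : R) : R :=
  xget 0 [set x | x <= xplus a f al /\ x + delta a f al x = y].

Definition Shf (a : R) (f : R -> R) (al : R) (x : R) : R :=
  if x <= salpha a f al then al * x + Fal f al (tau a f al x) else x.

Definition inP (g : R -> R) : Prop :=
  [/\ continuous g,
      (forall x, `|x| <= g x),
      (exists M : R, forall x, M <= `|x| -> g x = `|x|) &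
      (exists x0, g x0 != `|x0|)].

Definition ag (g : R -> R) : R := inf [set x | g x != `|x|].
Definition bg (g : R -> R) : R := sup [set x | g x != `|x|].

Definition gr (g : R -> R) : set (R * R) :=
  [set p | ag g <= p.1 <= bg g /\ 0 <= p.2 /\ `|p.1| <= p.2 <= g p.1].

Definition valpha (al : R) : R * R :=
  ((Num.sqrt (1 + al ^+ 2))^-1, al / Num.sqrt (1 + al ^+ 2)).

Definition ptline (al : R) (p : R * R) (s : R) : R * R :=
  (p.1 + s * (valpha al).1, p.2 + s * (valpha al).2).

(* parametrisation (isometric, v unit) of K ∩ (p + R v_alpha) *)
Definition lineset (al : R) (K : set (R * R)) (p : R * R) : set R :=
  [set s | K (ptline al p s)].

Definition Kp (al : R) (K : set (R * R)) (p : R * R) : set (R * R) :=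
  [set q | lineset al K p !=set0 /\
     exists2 s, 0 <= s <= fine (lebesgue_measure (lineset al K p)) &
       q = ptline al p s].

Definition ShK (al : R) (K : set (R * R)) : set (R * R) :=
  \bigcup_(p in [set p : R * R | p.2 = - p.1]) Kp al K p.

End Defs.

(* Main.v *)
Require Import Defs.
From HB Require Import structures.
From mathcomp Require Import all_boot all_order all_algebra.
From mathcomp Require Import all_classical all_reals all_analysis.
From mathcomp Require Import ring lra.
Set Implicit Arguments. Unset Strict Implicit. Unset Printing Implicit Defensive.
Import Order.TTheory GRing.Theory Num.Theory.
Import numFieldNormedType.Exports.
Local Open Scope classical_set_scope.
Local Open Scope ring_scope.


Lemma le_divs (R : realType) (A B h C : R) : 0 < h -> 0 < C -> A * C <= B * h -> A / h <= B / C.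
Proof.
move=> h0 C0 H; rewrite -(ler_pM2r (mulr_gt0 h0 C0)).
have -> : A / h * (h * C) = A * C by field; lra.
have -> : B / C * (h * C) = B * h by field; lra.
done.
Qed.
Lemma lt_divs (R : realType) (A B h C : R) : 0 < h -> 0 < C -> A * C < B * h -> A / h < B / C.
Proof.
move=> h0 C0 H; rewrite -(ltr_pM2r (mulr_gt0 h0 C0)).
have -> : A / h * (h * C) = A * C by field; lra.
have -> : B / C * (h * C) = B * h by field; lra.
done.
Qed.

Lemma is_derive_ext (R : realType) (x : R) (f g : R -> R) df :
  (forall z, f z = g z) -> is_derive x 1 f df -> is_derive x 1 g df.
Proof. by move=> /funext ->. Qed.

Lemma is_derive_cont (R : realType) (x : R) (f : R -> R) df :
  is_derive x 1 f df -> {for x, continuous f}.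
Proof. by move=> [d _]; apply: differentiable_continuous; apply/derivable1_diffP. Qed.

Lemma lip_cont (R : realType) (phi : R -> R) (L : R) : 0 < L ->
  (forall u v, u <= v -> - (L * (v - u)) <= phi v - phi u <= L * (v - u)) ->
  continuous phi.
Proof.
move=> L0 H x; apply/cvgrPdist_lt => e e0.
apply/nbhs_ballP; exists (e / L); first by apply: divr_gt0.
move=> z; rewrite /ball /= => xz.
have xz' : `|x - z| * L < e by rewrite -ltr_pdivlMr.
rewrite ltr_norml.
case: (lerP x z) => c.
- have := H _ _ c; rewrite ler0_norm in xz'; last by rewrite subr_le0.
  move=> /andP[h1 h2]; apply/andP; split; lra.
- have := H _ _ (ltW c); rewrite gtr0_norm in xz'; last by rewrite subr_gt0.
  move=> /andP[h1 h2]; apply/andP; split; lra.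
Qed.

Lemma meas_seg (R : realType) (L : R) : 0 <= L ->
  fine (lebesgue_measure [set s : R | 0 <= s <= L]) = L.
Proof.
move=> L0.
have -> : [set s : R | 0 <= s <= L] = [set` `[0, L]].
  by apply/seteqP; split => s /=; rewrite in_itv.
rewrite lebesgue_measure_itv /= lte_fin.
case: (ltrP 0 L) => L0'.
  by rewrite /= oppr0 addr0.
by apply/esym/le_anti; rewrite L0 L0'.
Qed.

Section P45.
Variables (R : realType) (a al : R) (f : R -> R).
Hypotheses (a0 : 0 < a) (al0 : 0 <= al) (al1 : al < 1) (fC : inCa a f).
Ltac hy := pose proof a0; pose proof al0; pose proof al1.
Ltac lra' := hy; lra.
Ltac nra' := hy; nra.

Lemma fder (x : R) : derivable f x 1.
Proof. by case: fC => [[+ _] _ _ _]; apply. Qed.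

Lemma fabs (s : R) : a <= `|s| -> f s = `|s|.
Proof. by case: fC => _ _ + _; apply. Qed.

Lemma fpos (s : R) : a <= s -> f s = s.
Proof. move=> h; have s0 : 0 <= s by lra'. by rewrite fabs; rewrite ger0_norm. Qed.

Lemma fneg (s : R) : s <= -a -> f s = - s.
Proof. move=> h; have s0 : s <= 0 by lra'. by rewrite fabs; rewrite ler0_norm //; lra'. Qed.

Lemma fconv (x y t : R) : -a <= x -> y <= a -> x < y -> 0 < t < 1 ->
  f (t * x + (1 - t) * y) < t * f x + (1 - t) * f y.
Proof. by case: fC => _ _ _; apply. Qed.

Lemma dq (x : R) : (fun h => h^-1 * (f (h + x) - f x)) @ 0^' --> derive1 f x.
Proof.
have := @fder x; rewrite /derivable derive1E /derive.
have -> : (fun h => h^-1 *: ((f \o shift x) (h *: (1:R)) - f x)) =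
   (fun h => h^-1 * (f (h + x) - f x)).
  by apply/funext => h /=; rewrite /GRing.scale /= mulr1.
by [].
Qed.

Lemma chord (u v w : R) : -a <= u -> u < v -> v < w -> w <= a ->
  f v * (w - u) < f u * (w - v) + f w * (v - u).
Proof.
move=> au uv vw wa.
have wu : 0 < w - u by rewrite subr_gt0 (lt_trans uv vw).
pose t := (w - v) / (w - u).
have t01 : 0 < t < 1.
  apply/andP; split; first by rewrite divr_gt0 // subr_gt0.
  by rewrite ltr_pdivrMr // mul1r; lra'.
have := @fconv u w t au wa (lt_trans uv vw) t01.
have -> : t * u + (1 - t) * w = v.
  rewrite /t; field; lra'.
move=> H.
rewrite /t in H.
have e1 : (1 - (w - v) / (w - u)) = (v - u) / (w - u) by field; lra'.
rewrite e1 in H.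
have -> : f u * (w - v) + f w * (v - u) = ((w - v) / (w - u) * f u + (v - u) / (w - u) * f w) * (w - u).
  field; lra'.
by rewrite ltr_pM2r.
Qed.


Lemma fd_le_slope (x m : R) : -a <= x -> x < m -> m <= a ->
  derive1 f x <= (f m - f x) / (m - x).
Proof.
move=> ax xm ma.
have H := cvg_dnbhs_at_right (@dq x).
rewrite -(cvg_lim (@Rhausdorff R) H); apply: limr_le; first exact: cvgP H.
near=> h.
have h0 : 0 < h by near: h; exact: nbhs_right_gt.
have hm : h < m - x by near: h; apply: nbhs_right_lt; rewrite subr_gt0.
have := @chord x (h + x) m ax ltac:(lra') ltac:(lra') ma.
move=> C.
by rewrite mulrC; apply: le_divs; nra'.
Unshelve. all: by end_near.
Qed.

Lemma fd_ge_slope (y m : R) : -a <= m -> m < y -> y <= a ->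
  (f y - f m) / (y - m) <= derive1 f y.
Proof.
move=> am my ya.
have H := cvg_dnbhs_at_left (@dq y).
rewrite -(cvg_lim (@Rhausdorff R) H); apply: limr_ge; first exact: cvgP H.
near=> h.
have h0 : h < 0 by near: h; exact: nbhs_left_lt.
have hm : m - y < h by near: h; apply: nbhs_left_gt; rewrite subr_lt0.
have := @chord m (h + y) y am ltac:(lra') ltac:(lra') ya.
move=> C.
have -> : h^-1 * (f (h + y) - f y) = (f y - f (h + y)) / (- h).
  rewrite invrN mulrN -mulNr opprB mulrC //.
by apply: le_divs; nra'.
Unshelve. all: by end_near.
Qed.

Lemma fd_strict (x y : R) : -a <= x -> x < y -> y <= a -> derive1 f x < derive1 f y.
Proof.
move=> ax xy ya.
pose m := (x + y) / 2.
have xm : x < m by rewrite /m; lra'.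
have my : m < y by rewrite /m; lra'.
have ma : m <= a by lra'.
have am : -a <= m by lra'.
have H1 := fd_le_slope ax xm ma.
have H2 := fd_ge_slope am my ya.
apply: (le_lt_trans H1); apply: (lt_le_trans _ H2).
have := @chord x m y ax xm my ya.
have e1 : y - x = (m - x) * 2 by rewrite /m; field.
have e2 : y - m = m - x by rewrite /m; field.
rewrite e1 e2 => C.
have d0 : 0 < m - x by lra'.
apply: lt_divs => //.
rewrite ltr_pM2r //.
move: C; set d := m - x => C.
have : (f m * 2 - f x - f y) * d < 0 by nra'.
rewrite pmulr_llt0 //; lra'.
Qed.

Lemma fd_pos (s : R) : a <= s -> derive1 f s = 1.
Proof.
move=> as_.
rewrite -(cvg_lim (@Rhausdorff R) (cvg_dnbhs_at_right (@dq s))).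
apply: (lim_near_cst (@Rhausdorff R)); near=> h.
have h0 : 0 < h by near: h; exact: nbhs_right_gt.
rewrite !fpos; try lra'.
by rewrite addrK mulVf // gt_eqF.
Unshelve. all: by end_near.
Qed.

Lemma fd_neg (s : R) : s <= -a -> derive1 f s = -1.
Proof.
move=> as_.
rewrite -(cvg_lim (@Rhausdorff R) (cvg_dnbhs_at_left (@dq s))).
apply: (lim_near_cst (@Rhausdorff R)); near=> h.
have h0 : h < 0 by near: h; exact: nbhs_left_lt.
rewrite !fneg; try lra'.
have -> : - (h + s) - - s = - h by ring.
by rewrite mulrN mulVf // lt_eqF.
Unshelve. all: by end_near.
Qed.


Lemma fd_le1 (c : R) : derive1 f c <= 1.
Proof.
case: (lerP a c) => [ac|ca]; first by rewrite fd_pos.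
case: (lerP c (-a)) => [ca'|ac']; first by rewrite fd_neg //; lra'.
rewrite -(@fd_pos a (lexx a)); apply/ltW/fd_strict; lra'.
Qed.

Lemma fd_ge1 (c : R) : -1 <= derive1 f c.
Proof.
case: (lerP c (-a)) => [ca'|ac']; first by rewrite fd_neg.
case: (lerP a c) => [ac|ca]; first by rewrite fd_pos //; lra'.
rewrite -(@fd_neg (-a) (lexx _)); apply/ltW/fd_strict; lra'.
Qed.

Lemma fD (x : R) : is_derive x 1 f (derive1 f x).
Proof. rewrite derive1E; apply: derivableP; exact: fder. Qed.

Lemma fcont : continuous f.
Proof. move=> x; apply: differentiable_continuous; apply/derivable1_diffP; exact: fder. Qed.

Lemma fMVT (u v : R) : u < v -> exists2 c, u < c < v & f v - f u = derive1 f c * (v - u).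
Proof.
move=> uv.
have [c cin e] := MVT uv (fun x _ => fD x) (continuous_subspaceT fcont).
by exists c => //; move: cin; rewrite in_itv.
Qed.

Lemma f_ge_id (s : R) : s <= f s.
Proof.
case: (lerP a s) => [as_|sa]; first by rewrite fpos //; lra'.
have [c /andP[sc ca] e] := fMVT sa.
have := fd_le1 c.
rewrite (@fpos a) in e; last lra'.
nra'.
Qed.

Lemma f_gt_id (s : R) : -a < s -> s < a -> s < f s.
Proof.
move=> as_ sa.
have [c /andP[sc ca] e] := fMVT sa.
have : derive1 f c < 1 by rewrite -(@fd_pos a (lexx a)); apply: fd_strict; lra'.
rewrite (@fpos a) in e; last lra'.
nra'.
Qed.

Lemma f_ge_neg (s : R) : - s <= f s.
Proof.
case: (lerP s (-a)) => [as_|sa]; first by rewrite fneg //; lra'.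
have [c /andP[sc ca] e] := fMVT sa.
have := fd_ge1 c.
rewrite (@fneg (-a)) in e; last lra'.
nra'.
Qed.

Lemma f_gt_neg (s : R) : -a < s -> s < a -> - s < f s.
Proof.
move=> as_ sa.
have [c /andP[sc ca] e] := fMVT as_.
have : -1 < derive1 f c by rewrite -(@fd_neg (-a) (lexx _)); apply: fd_strict; lra'.
rewrite (@fneg (-a)) in e; last lra'.
nra'.
Qed.

Lemma f_ge_abs (s : R) : `|s| <= f s.
Proof. case: (lerP 0 s) => s0; [rewrite ger0_norm // | rewrite ltr0_norm //]; [exact: f_ge_id | exact: f_ge_neg]. Qed.

Notation xp := (xplus a f al).

Lemma xpP : (-a <= xp <= a) /\ derive1 f xp = al.
Proof.
apply: (xgetPex 0 (P := [set x | -a <= x <= a /\ derive1 f x = al])).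
have : (-a <= a) by lra'.
move=> aa.
have fdc : continuous (derive1 f) by case: fC => [[_ +] _ _ _].
have mm : Num.min (derive1 f (-a)) (derive1 f a) <= al <= Num.max (derive1 f (-a)) (derive1 f a).
  rewrite fd_neg ?lexx // fd_pos ?lexx // ge_min le_max.
  apply/andP; split; apply/orP; [left|right]; lra'.
have [c cin e] := @IVT R (derive1 f) (-a) a al aa (continuous_subspaceT fdc) mm.
by exists c; split => //; move: cin; rewrite in_itv.
Qed.

Lemma fd_lt (c : R) : c < xp -> derive1 f c < al.
Proof.
move=> cx; have [/andP[ax xa] e] := xpP; rewrite -e.
case: (lerP c (-a)) => ca; last by apply: fd_strict; lra'.
rewrite fd_neg //; case: (ltrP (-a) xp) => ax'.
  by rewrite -(@fd_neg (-a) (lexx _)); apply: fd_strict; lra'.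
lra'.
Qed.

Lemma fd_gt (c : R) : xp < c -> al < derive1 f c.
Proof.
move=> cx; have [/andP[ax xa] e] := xpP; rewrite -e.
case: (lerP a c) => ca; last by apply: fd_strict; lra'.
rewrite (@fd_pos c) //; lra'.
Qed.



Local Notation F := (Fal f al).
Local Notation Fd x := (derive1 f x - al).

Lemma FD (x : R) : is_derive x 1 F (Fd x).
Proof.
have H := is_deriveB (fD x) (is_deriveZ al (is_derive_id x 1)).
have -> : Fd x = derive1 f x - al *: (1:R) by rewrite /GRing.scale /= mulr1.
apply: is_derive_ext H => z.
by rewrite /Fal /= /GRing.scale /=.
Qed.

Lemma Fcont : continuous F.
Proof. by move=> x; apply: is_derive_cont (FD x). Qed.

Lemma FMVT (u v : R) : u < v -> exists2 c, u < c < v & F v - F u = Fd c * (v - u).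
Proof.
move=> uv; have [c cin e] := fMVT uv; exists c => //.
rewrite /Fal; lra'.
Qed.

Lemma F_dec (u v : R) : u < v -> v <= xp -> F v < F u.
Proof.
move=> uv vx; have [c /andP[uc cv] e] := FMVT uv.
have := @fd_lt c ltac:(lra'); nra'.
Qed.

Lemma F_inc (u v : R) : xp <= u -> u < v -> F u < F v.
Proof.
move=> xu uv; have [c /andP[uc cv] e] := FMVT uv.
have := @fd_gt c ltac:(lra'); nra'.
Qed.

Lemma F_lip (u v : R) : u <= v -> F v - F u <= (1 - al) * (v - u).
Proof.
rewrite le_eqVlt => /orP[/eqP->|uv]; first by rewrite !subrr mulr0.
have [c /andP[uc cv] e] := FMVT uv.
have := fd_le1 c; nra'.
Qed.

Lemma F_pos (s : R) : 0 < F s.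
Proof.
rewrite /Fal; have := f_ge_abs s.
case: (ltrgtP s 0) => s0.
- rewrite ltr0_norm //; nra'.
- rewrite gtr0_norm //; nra'.
- rewrite s0 mulr0 subr0; have := @f_gt_id 0 ltac:(lra') ltac:(lra'); lra'.
Qed.

Lemma F_big (s : R) : a <= s -> F s = (1 - al) * s.
Proof. by move=> as_; rewrite /Fal fpos //; lra'. Qed.

Lemma F_small (s : R) : s <= -a -> F s = - (1 + al) * s.
Proof. by move=> as_; rewrite /Fal fneg //; lra'. Qed.

Lemma F_min (s : R) : F xp <= F s.
Proof.
case: (ltrgtP s xp) => sx; last by rewrite sx.
- by apply/ltW/F_dec.
- by apply/ltW/F_inc.
Qed.

Lemma xp_bnd : -a <= xp <= a.
Proof. by case: xpP. Qed.

Lemma F_inj (u v : R) : xp <= u -> xp <= v -> F u = F v -> u = v.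
Proof.
move=> xu xv e; case: (ltrgtP u v) => // uv.
- by have := F_inc xu uv; rewrite e ltxx.
- by have := F_inc xv uv; rewrite e ltxx.
Qed.

Lemma Finv_ex (y : R) : F xp <= y -> exists u, xp <= u /\ F u = y.
Proof.
move=> yF.
have y0 : 0 < y by apply: lt_le_trans (F_pos _) yF.
have [xa1 xa2] := andP xp_bnd.
pose B := a + y / (1 - al).
have yB : y / (1 - al) * (1 - al) = y by field; lra'.
have yp : 0 < y / (1 - al) by apply: divr_gt0; lra'.
have aB : a <= B by rewrite /B; lra'.
have xB : xp <= B by lra'.
have FB : F B = (1 - al) * a + y.
  rewrite F_big //; rewrite /B mulrDr; congr (_ + _); rewrite mulrC; exact: yB.
have mm : Num.min (F xp) (F B) <= y <= Num.max (F xp) (F B).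
  rewrite ge_min le_max; apply/andP; split; apply/orP; [left|right] => //.
  rewrite FB; nra'.
have [c cin e] := @IVT R F xp B y xB (continuous_subspaceT Fcont) mm.
by exists c; split => //; move: cin; rewrite in_itv /= => /andP[].
Qed.

Lemma FinvP (y : R) : F xp <= y -> xp <= Finv a f al y /\ F (Finv a f al y) = y.
Proof.
move=> yF; exact: (xgetPex 0 (P := [set x | xp <= x /\ F x = y]) (Finv_ex yF)).
Qed.

Lemma FinvK (u : R) : xp <= u -> Finv a f al (F u) = u.
Proof.
move=> xu; have [h1 h2] := FinvP (F_min u).
exact: F_inj.
Qed.

Local Notation ph := (phi a f al).

Lemma phiP (x : R) : xp <= ph x /\ F (ph x) = F x.
Proof. exact: FinvP (F_min x). Qed.

Lemma phi_gt (x : R) : x < xp -> xp < ph x.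
Proof.
move=> xx; have [h1 h2] := phiP x.
rewrite lt_neqAle h1 andbT; apply/eqP => e.
by have := F_dec xx (lexx _); rewrite -h2 -e ltxx.
Qed.

Lemma phi_small (x : R) : x <= -a -> ph x = - (1 + al) * x / (1 - al).
Proof.
move=> xa; have [xa1 xa2] := andP xp_bnd.
pose u := - (1 + al) * x / (1 - al).
have au : a <= u.
  rewrite /u ler_pdivlMr; last lra'.
  nra'.
rewrite /phi -/u; have -> : F x = F u.
  rewrite F_small // F_big // /u; field; lra'.
by rewrite FinvK //; lra'.
Qed.


Definition hh (x : R) := x + delta a f al x.
Local Notation k := ((1 - al)^-1).
Local Notation sa := (salpha a f al).

Lemma k_pos : 0 < k.
Proof. by rewrite invr_gt0; lra'. Qed.

Lemma k_mul : k * (1 - al) = 1.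
Proof. by rewrite mulVf //; apply/eqP; lra'. Qed.

Lemma phi_xp : ph xp = xp.
Proof. by rewrite /phi FinvK. Qed.

Lemma sa_eq : sa = k * F xp.
Proof. by rewrite /salpha /delta phi_xp; ring. Qed.

Lemma sa_pos : 0 < sa.
Proof. by rewrite sa_eq; apply: mulr_gt0; [exact: k_pos | exact: F_pos]. Qed.

Lemma hh_xp : hh xp = sa.
Proof. by []. Qed.

Lemma phi_le (x y : R) : x <= y -> y <= xp -> ph y <= ph x.
Proof.
move=> xy yx; rewrite leNgt; apply/negP => H.
have [p1 p2] := phiP x; have [q1 q2] := phiP y.
have := F_inc p1 H; rewrite p2 q2.
case: (ltrgtP x y) xy => // [xy' _|-> _]; last by rewrite ltxx.
by have := F_dec xy' yx; move=> /ltW; rewrite leNgt => /negP.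
Qed.

Lemma h_mono (x y : R) : x <= y -> y <= xp -> y - x <= hh y - hh x.
Proof.
move=> xy yx.
have Fxy : F y <= F x.
  case: (ltrgtP x y) xy => // [xy' _|-> _]; last by [].
  exact/ltW/F_dec.
have pxy := phi_le xy yx.
have [p1 p2] := phiP x; have [q1 q2] := phiP y.
have L := F_lip pxy; rewrite p2 q2 in L.
have K := k_pos; have K1 := k_mul.
have : k * (F x - F y) <= k * ((1 - al) * (ph x - ph y)) by rewrite ler_pM2l.
rewrite mulrA K1 mul1r => H.
rewrite /hh /delta; lra'.
Qed.

Lemma h_small (x : R) : x <= -a -> hh x = x.
Proof.
move=> xa; rewrite /hh /delta phi_small // F_small //.
field; lra'.
Qed.

Lemma hh_le_sa (x : R) : x <= xp -> hh x <= sa.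
Proof. move=> xx; have := h_mono xx (lexx _); rewrite hh_xp; lra'. Qed.

Lemma h_inj (x y : R) : x <= xp -> y <= xp -> hh x = hh y -> x = y.
Proof.
move=> xx yx e; case: (ltrgtP x y) => // xy.
- by have := h_mono (ltW xy) yx; rewrite e; lra'.
- by have := h_mono (ltW xy) xx; rewrite e; lra'.
Qed.

Lemma Finv_D (u : R) : xp < u -> is_derive (F u) 1 (Finv a f al) (Fd u)^-1.
Proof.
move=> xu; apply: is_derive_inverse.
- near=> z; apply: FinvK; apply: ltW; near: z; exact: lt_nbhsr.
- by near=> z; apply: Fcont.
- exact: FD.
- by apply/eqP => e; have := fd_gt xu; lra'.
Unshelve. all: by end_near.
Qed.

Lemma phD (x : R) : x < xp -> is_derive x 1 ph ((Fd (ph x))^-1 * Fd x).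
Proof.
move=> xx; have [p1 p2] := phiP x.
have H := Finv_D (phi_gt xx); rewrite p2 in H.
have := is_derive1_comp H (FD x).
by apply: is_derive_ext.
Qed.

Definition hd (x : R) := 1 + (k * Fd x - (Fd (ph x))^-1 * Fd x).

Lemma hD (x : R) : x < xp -> is_derive x 1 hh (hd x).
Proof.
move=> xx.
have H := is_deriveD (is_derive_id x 1) (is_deriveB (is_deriveZ k (FD x)) (phD xx)).
rewrite /hd; have -> : k * Fd x = k *: Fd x by [].
apply: is_derive_ext H => z.
by rewrite /hh /delta.
Qed.

Lemma hd_ge1 (x : R) : x < xp -> 1 <= hd x.
Proof.
move=> xx.
have d0 : Fd x < 0 by have := fd_lt xx; lra'.
have p0 : 0 < Fd (ph x) by have := fd_gt (phi_gt xx); lra'.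
have p1 : Fd (ph x) <= 1 - al by have := fd_le1 (ph x); lra'.
have kp : k <= (Fd (ph x))^-1.
  rewrite -[X in _ <= X]mul1r ler_pdivlMr //.
  have := k_mul; have := k_pos; nra'.
have : 0 <= ((Fd (ph x))^-1 - k) * (- Fd x) by apply: mulr_ge0; lra'.
rewrite /hd; lra'.
Qed.

Lemma hh_cont (x : R) : x < xp -> {for x, continuous hh}.
Proof. by move=> xx; apply: is_derive_cont (hD xx). Qed.


Lemma tau_ex (y : R) : y <= sa -> exists x, x <= xp /\ hh x = y.
Proof.
rewrite le_eqVlt => /orP[/eqP->|ys]; first by exists xp.
pose e := (sa - y) / 3.
have e0 : 0 < e by rewrite /e; apply: divr_gt0; lra'.
have Fe : F xp < F (xp + e) by apply: F_inc; lra'.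
have H : \forall t \near xp, F t < F (xp + e) := cvgr_lt _ (@Fcont xp) _ Fe.
have [d d0 Hd] := (nbhs_ballP xp (fun x => F x < F (xp + e))).1 (H _).
pose z := xp - Num.min d e / 2.
have m0 : 0 < Num.min d e by rewrite lt_min d0 e0.
have md : Num.min d e <= d by rewrite ge_min lexx.
have me : Num.min d e <= e by rewrite ge_min lexx orbT.
have zx : z < xp by rewrite /z; lra'.
have zxe : xp - e < z by rewrite /z; lra'.
have Fz : F z < F (xp + e).
  apply: Hd; rewrite /ball /= /z.
  have -> : xp - (xp - Num.min d e / 2) = Num.min d e / 2 by ring.
  rewrite ger0_norm; lra'.
have pz : ph z < xp + e.
  rewrite ltNge; apply/negP => H3.
  have [p1 p2] := phiP z.
  have : F (xp + e) <= F (ph z).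
    case: (ltrgtP (xp + e) (ph z)) H3 => // [lt _|-> _]; last by [].
    by apply/ltW/F_inc => //; lra'.
  rewrite p2; lra'.
have Fz2 := F_min z.
have K := k_pos.
have : k * F xp <= k * F z by rewrite ler_pM2l.
rewrite -sa_eq => kz.
have hz : y < hh z by rewrite /hh /delta /e in kz zxe pz *; lra'.
pose c := - a - y * y - 1.
have [xa1 xa2] := andP xp_bnd.
have cy : c <= y by rewrite /c; nra'.
have ca : c <= -a by rewrite /c; nra'.
have hc : hh c = c by rewrite h_small.
have cz : c <= z.
  rewrite leNgt; apply/negP => zc.
  have := h_mono (ltW zc) ltac:(lra'); rewrite hc; lra'.
have mm : Num.min (hh c) (hh z) <= y <= Num.max (hh c) (hh z).
  rewrite ge_min le_max hc cy /=; apply/orP; right; lra'.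
have ct : {within `[c, z], continuous hh}.
  apply: continuous_in_subspaceT => w; rewrite inE /= in_itv /= => /andP[_ wz].
  by apply: hh_cont; lra'.
have [x xin ex] := IVT cz ct mm.
exists x; split => //; move: xin; rewrite in_itv /= => /andP[_ ?]; lra'.
Qed.

Local Notation ta := (tau a f al).

Lemma tauP (y : R) : y <= sa -> ta y <= xp /\ hh (ta y) = y.
Proof.
move=> ys; exact: (xgetPex 0 (P := [set x | x <= xp /\ x + delta a f al x = y]) (tau_ex ys)).
Qed.

Lemma tau_h (x : R) : x <= xp -> ta (hh x) = x.
Proof.
move=> xx; have [t1 t2] := tauP (hh_le_sa xx).
exact: h_inj.
Qed.

Lemma tau_xp : ta sa = xp.
Proof. by rewrite -hh_xp tau_h. Qed.

Lemma tau_mono (u v : R) : u <= v -> v <= sa -> ta u <= ta v /\ ta v - ta u <= v - u.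
Proof.
move=> uv vs.
have [p1 p2] := tauP (le_trans uv vs); have [q1 q2] := tauP vs.
have tt : ta u <= ta v.
  rewrite leNgt; apply/negP => H.
  have := h_mono (ltW H) p1; rewrite p2 q2; lra'.
split => //; have := h_mono tt q1; rewrite p2 q2; lra'.
Qed.

Lemma tau_lt (y : R) : y < sa -> ta y < xp.
Proof.
move=> ys; have [t1 t2] := tauP (ltW ys).
rewrite lt_neqAle t1 andbT; apply/eqP => e.
by move: t2; rewrite e hh_xp => e2; move: ys; rewrite e2 ltxx.
Qed.

Lemma tau_small (x : R) : x <= -a -> ta x = x.
Proof.
move=> xa; have [xa1 xa2] := andP xp_bnd.
by rewrite -{1}(h_small xa) tau_h //; lra'.
Qed.

Lemma tD (y : R) : y < sa -> is_derive y 1 ta (hd (ta y))^-1.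
Proof.
move=> ys; have tx := tau_lt ys; have [_ t2] := tauP (ltW ys).
rewrite -{1}t2.
apply: is_derive_inverse.
- near=> z; apply: tau_h; apply: ltW; near: z; exact: lt_nbhsl.
- near=> z; apply: hh_cont; near: z; exact: lt_nbhsl.
- exact: hD.
- by apply/eqP => e; have := hd_ge1 tx; lra'.
Unshelve. all: by end_near.
Qed.


Local Notation g := (Shf a f al).
Definition M (y : R) : R := if y <= sa then y else sa.

Lemma g_le (y : R) : y <= sa -> g y = al * y + F (ta y).
Proof. by move=> ys; rewrite /Shf ys. Qed.

Lemma g_gt (y : R) : sa < y -> g y = y.
Proof. by move=> ys; rewrite /Shf leNgt ys. Qed.

Lemma F_xp : F xp = (1 - al) * sa.
Proof. by rewrite sa_eq mulrA (mulrC (1 - al) k) k_mul mul1r. Qed.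

Lemma g_formula (y : R) : g y = al * y + F (ta (M y)) + (1 - al) * (y - M y).
Proof.
case: (lerP y sa) => ys.
- by rewrite /M ys g_le // subrr mulr0 addr0.
- rewrite /M leNgt ys /= g_gt // tau_xp F_xp; ring.
Qed.

Lemma M_mono (u v : R) : u <= v -> M u <= M v /\ M v - M u <= v - u.
Proof.
move=> uv; case: (lerP v sa) => vs.
- rewrite /M vs (le_trans uv vs); split => //; lra'.
- rewrite /M (leNgt v) vs /=; case: (lerP u sa) => us.
  + split => //; lra'.
  + split => //; lra'.
Qed.

Lemma M_le (y : R) : M y <= sa.
Proof. by rewrite /M; case: (lerP y sa) => // /ltW. Qed.

Lemma F_lip2 (u v : R) : u <= v -> - ((1 + al) * (v - u)) <= F v - F u.
Proof.
rewrite le_eqVlt => /orP[/eqP->|uv]; first by rewrite !subrr mulr0 oppr0.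
have [c /andP[uc cv] e] := FMVT uv.
have := fd_ge1 c; nra'.
Qed.

Lemma g_lip (u v : R) : u <= v -> - (3 * (v - u)) <= g v - g u <= 3 * (v - u).
Proof.
move=> uv; rewrite !g_formula.
have [m1 m2] := M_mono uv.
have [t1 t2] := tau_mono m1 (M_le v).
have F1 := F_lip t1; have F2 := F_lip2 t1.
have P1 : 0 <= (1 + al) * ((v - u) - (ta (M v) - ta (M u))) by apply: mulr_ge0; lra'.
have P2 : 0 <= (1 - al) * ((v - u) - (ta (M v) - ta (M u))) by apply: mulr_ge0; lra'.
have P3 : 0 <= (1 - al) * (M v - M u) by apply: mulr_ge0; lra'.
have P4 : 0 <= (1 - al) * ((v - u) - (M v - M u)) by apply: mulr_ge0; lra'.
have P5 : 0 <= al * (v - u) by apply: mulr_ge0; lra'.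
have P6 : 0 <= (1 - al) * (ta (M v) - ta (M u)) by apply: mulr_ge0; lra'.
have P7 : 0 <= (1 - al) * (v - u) by apply: mulr_ge0; lra'.
apply/andP; split; nra'.
Qed.

Lemma g_cont : continuous g.
Proof. by apply: (@lip_cont _ _ 3) => //; exact: g_lip. Qed.

Lemma g_ge_abs (x : R) : `|x| <= g x.
Proof.
case: (lerP x sa) => xs; last first.
  by rewrite g_gt // ger0_norm //; have := sa_pos; lra'.
have [t1 t2] := tauP xs.
rewrite g_le //.
set t := ta x in t1 t2 *.
have [p1 p2] := phiP t.
have c1 : (1 - al) * ph t <= F t.
  rewrite -p2 /Fal; have := f_ge_id (ph t); lra'.
have c2 : - (1 + al) * t <= F t by rewrite /Fal; have := f_ge_neg t; lra'.
have K := k_pos; have K1 := k_mul.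
have c3 : ph t <= k * F t.
  have : k * ((1 - al) * ph t) <= k * F t by rewrite ler_pM2l.
  by rewrite mulrA K1 mul1r.
have ex : x = t + k * F t - ph t by rewrite -t2 /hh /delta; ring.
have tp : t <= ph t by lra'.
rewrite ler_norml; apply/andP; split.
- rewrite ex.
  have : (1 + al) * (ph t - t) <= (1 + al) * (k * F t - t) by rewrite ler_pM2l; lra'.
  have : 0 <= F t by apply/ltW/F_pos.
  nra'.
- rewrite ex.
  have e1 : (1 - al) * (k * F t) = F t by rewrite mulrA (mulrC _ k) K1 mul1r.
  nra'.
Qed.

Lemma g_big (x : R) : a + sa <= `|x| -> g x = `|x|.
Proof.
have sp := sa_pos; have [xa1 xa2] := andP xp_bnd.
case: (lerP 0 x) => x0.
  rewrite ger0_norm // => H; rewrite g_gt //; lra'.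
rewrite ltr0_norm // => H.
have xa : x <= -a by lra'.
rewrite g_le; last lra'.
rewrite tau_small // /Fal fneg //; ring.
Qed.

Lemma g0 : g 0 != `|0 : R|.
Proof.
rewrite normr0 g_le; last exact/ltW/sa_pos.
rewrite mulr0 add0r; apply/eqP => e.
by have := F_pos (ta 0); rewrite e ltxx.
Qed.

Lemma g_inP : inP g.
Proof.
split.
- exact: g_cont.
- exact: g_ge_abs.
- by exists (a + sa) => x; apply: g_big.
- by exists 0; exact: g0.
Qed.


Lemma S0 : g 0 != `|0 : R|.
Proof. exact: g0. Qed.

Lemma S_ub (y : R) : g y != `|y| -> y <= sa.
Proof.
move=> H; rewrite leNgt; apply/negP => ys.
have := sa_pos => sp.
by move: H; rewrite g_gt // ger0_norm ?eqxx //; lra'.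
Qed.

Lemma S_lb (y : R) : g y != `|y| -> - (a + sa) < y.
Proof.
move=> H; rewrite ltNge; apply/negP => ys.
have := sa_pos => sp.
by move: H; rewrite g_big ?eqxx //; rewrite ler0_norm; lra'.
Qed.

Local Notation SS := [set x : R | g x != `|x|].

Lemma SS_ne : SS !=set0.
Proof. by exists 0; exact: S0. Qed.

Lemma SS_ub : has_ubound SS.
Proof. by exists sa => y; exact: S_ub. Qed.

Lemma SS_lb : has_lbound SS.
Proof. by exists (- (a + sa)) => y /S_lb /ltW. Qed.

Lemma bg_le : bg g <= sa.
Proof. by apply: ge_sup; [exact: SS_ne | move=> y; exact: S_ub]. Qed.

Lemma bg_ge0 : 0 <= bg g.
Proof. exact: (ub_le_sup SS_ub S0). Qed.

Lemma ag_le0 : ag g <= 0.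
Proof. exact: (ge_inf SS_lb S0). Qed.

Lemma below_ag (t : R) : t < ag g -> g t = `|t|.
Proof.
move=> ta_; apply/eqP; apply: contraT => H.
have := ge_inf SS_lb H; rewrite /ag => H2.
by move: ta_; rewrite ltNge H2.
Qed.

Lemma gD (x : R) : x < sa -> is_derive x 1 g (al + Fd (ta x) * (hd (ta x))^-1).
Proof.
move=> xs.
have H := is_deriveD (is_deriveZ al (is_derive_id x 1)) (is_derive1_comp (FD (ta x)) (tD xs)).
have e : al *: (1 : R) = al by rewrite /GRing.scale /= mulr1.
rewrite e in H.
apply: (near_eq_is_derive _ H).
near=> y.
have ys : y <= sa by apply: ltW; near: y; exact: lt_nbhsl.
by rewrite g_le.
Unshelve. all: by end_near.
Qed.

Lemma g_deriv (x : R) : ag g < x < bg g -> derivable g x 1 /\ derive1 g x < al.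
Proof.
move=> /andP[_ xb]; have xs : x < sa by apply: lt_le_trans xb bg_le.
have [D1 D2] := gD xs; split; first exact: D1.
rewrite derive1E D2.
have tx := tau_lt xs.
have hp : 0 < (hd (ta x))^-1 by rewrite invr_gt0; have := hd_ge1 tx; lra'.
have : Fd (ta x) * (hd (ta x))^-1 < 0 by rewrite pmulr_llt0 //; have := fd_lt tx; lra'.
lra'.
Qed.


Lemma Phi_dec (u v : R) : u < v -> v <= sa -> g v - al * v < g u - al * u.
Proof.
move=> uv vs; have us : u <= sa by apply: le_trans (ltW uv) vs.
rewrite (g_le vs) (g_le us).
have -> : al * v + F (ta v) - al * v = F (ta v) by ring.
have -> : al * u + F (ta u) - al * u = F (ta u) by ring.
have [t1 _] := tau_mono (ltW uv) vs.
have [p1 p2] := tauP us; have [q1 q2] := tauP vs.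
apply: F_dec => //.
rewrite lt_neqAle t1 andbT; apply/eqP => e.
by move: uv; rewrite -p2 -q2 e ltxx.
Qed.

Lemma Phi_le (u v : R) : u <= v -> v <= sa -> g v - al * v <= g u - al * u.
Proof.
rewrite le_eqVlt => /orP[/eqP->|uv] vs //.
exact/ltW/Phi_dec.
Qed.

Local Notation c1 := (valpha al).1.
Local Notation c2 := (valpha al).2.

Lemma c1_pos : 0 < c1.
Proof.
rewrite /valpha /= invr_gt0 sqrtr_gt0.
have : 0 <= al ^+ 2 by apply: sqr_ge0.
lra'.
Qed.

Lemma c2_eq : c2 = al * c1.
Proof. by rewrite /valpha. Qed.

Local Notation G := (gr g).

Lemma line_iff (t s : R) : lineset al G (t, - t) s <->
  [/\ ag g <= t + s * c1, t + s * c1 <= bg g, 0 <= - t + s * (al * c1),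
      `|t + s * c1| <= - t + s * (al * c1) & - t + s * (al * c1) <= g (t + s * c1)].
Proof.
rewrite /lineset /ptline /gr c2_eq; split.
- by move=> /= [/andP[h1 h2] [h3 /andP[h4 h5]]].
- by move=> [h1 h2 h3 h4 h5] /=; split; [apply/andP|split; [|apply/andP]].
Qed.


Lemma line_key (t : R) : (exists s0, lineset al G (t, - t) s0) ->
  exists L, 0 <= L /\ lineset al G (t, - t) = [set s | 0 <= s <= L].
Proof.
move=> [s0 /line_iff [h1 h2 h3 h4 h5]].
have C := c1_pos.
have bs := bg_le; have b0 := bg_ge0.
move: h4; rewrite ler_norml => /andP[h4a h4b].
have s0c : 0 <= s0 * c1.
  have : 0 <= (1 + al) * (s0 * c1) by lra'.
  by rewrite pmulr_rge0 //; lra'.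
have t0 : t <= 0.
  have : 0 <= (1 - al) * (s0 * c1) by apply: mulr_ge0; lra'.
  lra'.
have agt : ag g <= t.
  rewrite leNgt; apply/negP => tl.
  have gt := below_ag tl; rewrite ler0_norm // in gt.
  have tX : t < t + s0 * c1 by apply: (lt_le_trans tl h1).
  have := Phi_dec tX ltac:(lra'); rewrite gt.
  lra'.
pose psi s := g (t + s * c1) - al * (t + s * c1).
have psi0 : - (1 + al) * t <= psi 0.
  rewrite /psi mul0r addr0; have := g_ge_abs t; rewrite ler0_norm //; lra'.
have inA : forall s, 0 <= s -> (1 - al) * (s * c1) <= -2 * t -> t + s * c1 <= bg g ->
    - (1 + al) * t <= psi s -> lineset al G (t, - t) s.
  move=> s sp H1 H2 H3; apply/line_iff.
  have sc : 0 <= s * c1 by apply: mulr_ge0; lra'.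
  have asc : 0 <= al * (s * c1) by apply: mulr_ge0; lra'.
  rewrite /psi in H3.
  split; try lra'.
  rewrite ler_norml; apply/andP; split; lra'.
have outA : forall s, lineset al G (t, - t) s ->
    [/\ 0 <= s, (1 - al) * (s * c1) <= -2 * t, t + s * c1 <= bg g &
        - (1 + al) * t <= psi s].
  move=> s /line_iff [k1 k2 k3 k4 k5].
  move: k4; rewrite ler_norml => /andP[k4a k4b].
  have sc : 0 <= s * c1.
    have : 0 <= (1 + al) * (s * c1) by lra'.
    by rewrite pmulr_rge0 //; lra'.
  split => //.
  - by move: sc; rewrite pmulr_lge0.
  - lra'.
  - rewrite /psi; lra'.
pose s1 := -2 * t / ((1 - al) * c1).
pose s2 := (bg g - t) / c1.
have C2 : 0 < (1 - al) * c1 by apply: mulr_gt0; lra'.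
have s1E : forall s, (s <= s1) = ((1 - al) * (s * c1) <= -2 * t).
  by move=> s; rewrite /s1 ler_pdivlMr // mulrCA mulrA.
have s2E : forall s, (s <= s2) = (t + s * c1 <= bg g).
  move=> s; rewrite /s2 ler_pdivlMr //.
  apply/idP/idP => H; lra'.
pose ss := if s1 <= s2 then s1 else s2.
have ss1 : ss <= s1 by rewrite /ss; case: (lerP s1 s2) => // /ltW.
have ss2 : ss <= s2 by rewrite /ss; case: (lerP s1 s2).
have sss : forall s, s <= s1 -> s <= s2 -> s <= ss by move=> s; rewrite /ss; case: ifP.
have ss0 : 0 <= ss.
  apply: sss; first by rewrite s1E mul0r mulr0; lra'.
  by rewrite s2E mul0r addr0; lra'.
have Xmono : forall u v, u <= v -> t + u * c1 <= t + v * c1.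
  by move=> u v uv; rewrite lerD2l ler_pM2r.
have Xsa : forall s, s <= ss -> t + s * c1 <= sa.
  move=> s sl; apply: le_trans bs; rewrite -s2E; exact: le_trans sl ss2.
case: (lerP (- (1 + al) * t) (psi ss)) => kss.
  exists ss; split => //; apply/seteqP; split => s /=.
    move/outA => [k1 k2 k3 k4]; rewrite k1 /=; apply: sss; by [rewrite s1E | rewrite s2E].
  move=> /andP[sp sl]; apply: inA => //.
  - by rewrite -s1E; apply: le_trans sl ss1.
  - by rewrite -s2E; apply: le_trans sl ss2.
  - apply: le_trans kss _; rewrite /psi; apply: Phi_le; first exact: Xmono.
    exact: Xsa.
have psi_lip : continuous psi.
  apply: (@lip_cont _ _ (4 * c1)); first lra'.
  move=> u v uv.
  have := g_lip (Xmono _ _ uv) => /andP[g1 g2].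
  have D0 : 0 <= (v - u) * c1 by apply: mulr_ge0; lra'.
  have D1 : 0 <= al * ((v - u) * c1) by apply: mulr_ge0; lra'.
  have D2 : 0 <= (1 - al) * ((v - u) * c1) by apply: mulr_ge0; lra'.
  rewrite /psi; apply/andP; split; lra'.
have mm : Num.min (psi 0) (psi ss) <= - (1 + al) * t <= Num.max (psi 0) (psi ss).
  rewrite ge_min le_max; apply/andP; split; apply/orP; [right|left]; lra'.
have [L Lin eL] := IVT ss0 (continuous_subspaceT psi_lip) mm.
move: Lin; rewrite in_itv /= => /andP[L0 Ls].
exists L; split => //; apply/seteqP; split => s /=.
  move/outA => [k1 k2 k3 k4]; rewrite k1 /=.
  rewrite leNgt; apply/negP => Ls'.
  have XL : t + L * c1 < t + s * c1 by rewrite ltrD2l ltr_pM2r.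
  have := Phi_dec XL (le_trans k3 bs).
  rewrite /psi in eL k4; lra'.
move=> /andP[sp sl]; apply: inA => //.
- by rewrite -s1E; apply: le_trans sl (le_trans Ls ss1).
- by rewrite -s2E; apply: le_trans sl (le_trans Ls ss2).
- rewrite -eL /psi; apply: Phi_le; first exact: Xmono.
  exact: Xsa.
Qed.


Lemma ShK_eq : ShK al G = G.
Proof.
apply/seteqP; split => q.
- move=> [[p1 p2] /= -> [ne [s /andP[s0 sL] ->]]].
  have [L [L0 eA]] := line_key ne.
  rewrite eA meas_seg // in sL.
  have : lineset al G (p1, - p1) s by rewrite eA /= s0 sL.
  by [].
- case: q => q1 q2 Gq.
  have C := c1_pos.
  pose w := (q1 + q2) / (1 + al).
  pose t := q1 - w.
  pose s := w / c1.
  have ep : ptline al (t, - t) s = (q1, q2).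
    rewrite /ptline c2_eq /s /t /w; move: C; set c := (valpha al).1 => C /=.
    congr (_, _); field; lra'.
  have As : lineset al G (t, - t) s by change (G (ptline al (t, - t) s)); rewrite ep.
  have [L [L0 eA]] := line_key (ex_intro _ s As).
  exists (t, - t) => //=.
  split; first by exists s.
  exists s; last by rewrite ep.
  by rewrite eA meas_seg //; move: As; rewrite eA.
Qed.

End P45.

Unset Implicit Arguments.

Theorem proposition4p5 (R : realType) (a al : R) (f : R -> R) :
  0 < a -> 0 <= al < 1 -> inCa a f ->
  let g := Shf a f al in
  [/\ inP g,
      (forall x, ag g < x < bg g -> derivable g x 1 /\ derive1 g x < al) &
      ShK al (gr g) = gr g].
Proof.
move=> a0 /andP[al0 al1] fC g; split.
- exact: (@g_inP R a al f a0 al0 al1 fC).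
- move=> x; exact: (@g_deriv R a al f a0 al0 al1 fC).
- exact: (@ShK_eq R a al f a0 al0 al1 fC).
Qed.
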